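(* For all $N\subseteq\mathbf{U}$, $w\in\mathbb{W}(N)$ and $i\in N$, we have $\bar v^\star_{w^{r^\star}_{-i}}=(\bar v^\star_w)_{-i}$.
   Context: $\mathbf{U}$ is a finite set of players; cardinalities of $N,S,B$ are $n,s,b$. $\Pi(N)$ is the set of partitions of $N$ ($\Pi(\emptyset)=\{\emptyset\}$). $p^\star$ is the Ewens distribution $p^\star_N(\pi)=\frac{\prod_{B\in\pi}(b-1)!}{n!}$. $\pi_{+i\leadsto B}=(\pi\setminus\{B\})\cup\{B\cup\{i\}\}$ for $B\in\pi$, $\pi_{+i\leadsto\emptyset}=\pi\cup\{\{i\}\}$. Embedded coalitions $\mathcal{E}(N)=\{(S,\pi):S\subseteq N,\pi\in\Pi(N\setminus S)\}$; a TUX game on $N$ is $w:\mathcal{E}(N)\to\mathbb{R}$ with $w(\emptyset,\pi)=0$; $\mathbb{W}(N)$ their set. The restriction operator $r^\star$: $w^{r^\star}_{-i}\in\mathbb{W}(N\setminus\{i\})$, $w^{r^\star}_{-i}(S,\pi)=\frac{1}{n-s}w(S,\pi_{+i\leadsto\emptyset})+\sum_{B\in\pi}\frac{b}{n-s}w(S,\pi_{+i\leadsto B})$ for $(S,\pi)\in\mathcal{E}(N\setminus\{i\})$. For $w\in\mathbb{W}(M)$, the average TU game $\bar v^\star_w$ on $M$ is $\bar v^\star_w(S)=\sum_{\pi\in\Pi(M\setminus S)}p^\star_{M\setminus S}(\pi)w(S,\pi)$ for $S\subseteq M$. For a TU game $v$ on $N$, $v_{-i}$ is its restriction to subsets of $N\setminus\{i\}$.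 *)

(* Defs.v *)
From mathcomp Require Import all_boot all_order all_algebra.
Set Implicit Arguments. Unset Strict Implicit. Unset Printing Implicit Defensive.
Import Order.TTheory GRing.Theory Num.Theory.
Local Open Scope ring_scope.

(* A partition of M is a P : {set {set T}} with [partition P M]
   (MathComp: blocks nonempty, pairwise disjoint, covering M);
   [partition set0 set0] holds, so Pi(emptyset) = {emptyset}. *)

Section Defs.
Variables (T : finType) (R : realFieldType).

Definition ewens (M : {set T}) (pi : {set {set T}}) : R :=
  (\prod_(B in pi) (#|B|.-1)`!)%:R / (#|M|)`!%:R.

Definition add_to_block (pi : {set {set T}}) (i : T) (B : {set T}) : {set {set T}} :=
  (pi :\ B) :|: [set B :|: [set i]].

Definition add_singleton (pi : {set {set T}}) (i : T) : {set {set T}} :=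
  pi :|: [set [set i]].

(* A TUX game on N is represented by a function on pairs (S, pi); only its
   values on embedded coalitions of N matter. *)
Definition is_TUX (N : {set T}) (w : {set T} -> {set {set T}} -> R) : Prop :=
  forall pi, partition pi N -> w set0 pi = 0.

Definition restr_star (N : {set T}) (w : {set T} -> {set {set T}} -> R) (i : T)
  : {set T} -> {set {set T}} -> R :=
  fun S pi =>
    w S (add_singleton pi i) / (#|N| - #|S|)%:R
    + \sum_(B in pi) (#|B|%:R / (#|N| - #|S|)%:R) * w S (add_to_block pi i B).

Definition avg_game (M : {set T}) (w : {set T} -> {set {set T}} -> R)
  (S : {set T}) : R :=
  \sum_(pi : {set {set T}} | partition pi (M :\: S)) ewens (M :\: S) pi * w S pi.

End Defs.

(* Main.v *)
Require Import Defs.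
From mathcomp Require Import all_boot all_order all_algebra.
From mathcomp Require Import ring.
Import Order.TTheory GRing.Theory Num.Theory.
Local Open Scope ring_scope.

Section Aux.
Variable T : finType.
Implicit Types (D B C X : {set T}) (pi P : {set {set T}}).

Lemma setD1_notin (U : finType) (A : {set U}) a : a \notin A -> A :\ a = A.
Proof.
move=> aA; apply/setP=> x; rewrite !inE; by case: eqP => // ->; rewrite (negbTE aA).
Qed.

Definition psi (i : T) P : {set {set T}} * {set T} :=
  let C := pblock P i in let B := C :\ i in
  ((P :\ C) :|: (if B == set0 then set0 else [set B]), B).

Lemma phi_part pi D B i : i \notin D -> partition pi D ->
  B \in pi :|: [set set0] -> partition (add_to_block pi i B) (i |: D).
Proof.
move=> iD pD /setUP[BP|/set1P->]; rewrite /add_to_block setUC.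
  have sBD := partitionS pD BP.
  have := partitionU1 (B := B :|: [set i]) (partitionD1 pD BP).
  have -> : B :|: [set i] :|: D :\: B = i |: D.
    apply/setP=> x; rewrite !inE; have := subsetP sBD x.
    by case: (x \in B); case: (x \in D); case: (x == i) => //= ->.
  apply.
    by apply/set0Pn; exists i; rewrite !inE eqxx orbT.
  rewrite -setI_eq0; apply/eqP/setP=> x; rewrite !inE.
  case: (eqVneq x i) => [->|]; first by rewrite (negbTE iD) !andbF.
  by case: (x \in B).
rewrite setD1_notin; last by rewrite (partition0 pD).
rewrite set0U; apply: partitionU1 => //.
  by apply/set0Pn; exists i; rewrite inE.
by rewrite disjoints1.
Qed.

Lemma psi_phi pi D B i : i \notin D -> partition pi D ->
  B \in pi :|: [set set0] -> psi i (add_to_block pi i B) = (pi, B).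
Proof.
move=> iD pD HB; have pP := phi_part _ _ _ _ iD pD HB.
have XP : B :|: [set i] \in add_to_block pi i B by rewrite !inE eqxx orbT.
have iB : i \notin B.
  case/setUP: HB => [BP|/set1P->]; last by rewrite inE.
  by apply: contra iD; apply: (subsetP (partitionS pD BP)).
rewrite /psi (def_pblock (partition_trivIset pP) XP); last by rewrite !inE eqxx orbT.
have -> : (B :|: [set i]) :\ i = B.
  by rewrite setUC setU1K.
have -> : add_to_block pi i B :\ (B :|: [set i]) = pi :\ B.
  apply/setP=> Y; rewrite !inE; case: (eqVneq Y (B :|: [set i])) => [->|] //=.
    case: (boolP (_ \in pi)) => XPi; first rewrite andbT; last by rewrite andbF.
    apply/esym/negbTE; apply: contra iD => _.
    have : i \in cover pi by apply/bigcupP; exists (B :|: [set i]); rewrite // !inE eqxx orbT.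
    by rewrite (cover_partition pD).
  by rewrite orbF.
case: eqP => [->|/eqP nB].
  by rewrite setU0 setD1_notin // (partition0 pD).
rewrite setUC setD1K //.
by case/setUP: HB => // /set1P Be; rewrite Be eqxx in nB.
Qed.

Lemma pblock_facts {P D i} : partition P (i |: D) ->
  pblock P i \in P /\ i \in pblock P i.
Proof.
move=> pP; have ic : i \in cover P by rewrite (cover_partition pP) setU11.
by split; [apply: pblock_mem | rewrite mem_pblock].
Qed.

Lemma B_notin {P D i} : partition P (i |: D) ->
  pblock P i :\ i != set0 -> pblock P i :\ i \notin P :\ pblock P i.
Proof.
move=> pP nB; have [CP iC] := pblock_facts pP.
apply/negP=> /setD1P[nBC BP].
have := trivIsetP (partition_trivIset pP) _ _ BP CP nBC.
rewrite -setI_eq0 => /eqP BC0; move/eqP: nB; apply.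
by rewrite -BC0; apply/esym/setIidPl; apply: subD1set.
Qed.

Lemma phi_psi P D i : i \notin D -> partition P (i |: D) ->
  add_to_block (psi i P).1 i (psi i P).2 = P.
Proof.
move=> iD pP; have [CP iC] := pblock_facts pP.
rewrite /psi /add_to_block /=.
have -> : pblock P i :\ i :|: [set i] = pblock P i by rewrite setUC setD1K.
case: eqP => [B0|/eqP nB].
  rewrite B0 setU0 setD1_notin; last by rewrite !inE (partition0 pP) andbF.
  by rewrite setUC setD1K.
rewrite [P :\ _ :|: _]setUC setU1K; last exact: (B_notin pP nB).
by rewrite setUC setD1K.
Qed.

Lemma psi_part P D i : i \notin D -> partition P (i |: D) ->
  partition (psi i P).1 D && ((psi i P).2 \in (psi i P).1 :|: [set set0]).
Proof.
move=> iD pP; have [CP iC] := pblock_facts pP.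
have sC := partitionS pP CP.
have pD1 := partitionD1 pP CP.
rewrite /psi /=; case: eqP => [B0|/eqP nB].
  rewrite setU0 B0 !inE eqxx orbT andbT.
  have Ci : pblock P i = [set i].
    apply/setP=> x; rewrite inE; apply/idP/eqP => [xC|->//].
    by apply/eqP; apply: contraT => nx; rewrite -(in_set0 x) -B0 !inE nx xC.
  by move: pD1; rewrite Ci setU1K.
apply/andP; split; last by rewrite !inE eqxx !orbT.
rewrite setUC.
have := partitionU1 pD1 nB.
have -> : pblock P i :\ i :|: (i |: D) :\: pblock P i = D.
  apply/setP=> x; rewrite !inE; have := subsetP sC x; rewrite !inE.
  case: (eqVneq x i) => [->|] /=; first by rewrite iC (negbTE iD).
  by move=> _; case: (x \in pblock P i) => //= ->.
apply; rewrite -setI_eq0; apply/eqP/setP=> x; rewrite !inE.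
by case: (x \in pblock P i); rewrite ?andbF.
Qed.

Lemma i_notin_block {p D B i} : i \notin D -> partition p D -> B \in p -> i \notin B.
Proof. by move=> iD pD BP; apply: contra iD; apply: (subsetP (partitionS pD BP)). Qed.

Lemma ewens_phi (R : realFieldType) pi D B i : i \notin D -> partition pi D ->
  B \in pi :|: [set set0] ->
  ewens R (i |: D) (add_to_block pi i B) =
  ewens R D pi * (if B == set0 then 1 else #|B|%:R) / #|i |: D|%:R.
Proof.
move=> iD pD HB.
rewrite /ewens cardsU1 iD add1n factS.
have fn0 : (#|D|`!)%:R != 0 :> R by rewrite pnatr_eq0 -lt0n fact_gt0.
have n0 : (#|D|.+1)%:R != 0 :> R by rewrite pnatr_eq0.
case/setUP: HB => [BP|/set1P->].
  have nB := partition_neq0 pD BP.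
  rewrite (negbTE nB) /add_to_block setUC big_setU1 /=; last first.
    rewrite !inE negb_and negbK; apply/orP; right; apply/negP => XP.
    have := i_notin_block iD pD XP; by rewrite !inE eqxx orbT.
  rewrite (big_setD1 _ BP) /= setUC cardsU1 (i_notin_block iD pD BP) add1n /=.
  have bp : (0 < #|B|)%N by rewrite card_gt0.
  rewrite -{1}(prednK bp) factS prednK //.
  by rewrite !natrM; field; rewrite nat1r n0 fn0.
rewrite eqxx /add_to_block setD1_notin ?(partition0 pD) // set0U setUC big_setU1 /=; last first.
  apply/negP => XP; have := i_notin_block iD pD XP; by rewrite !inE eqxx.
by rewrite cards1 /= !natrM fact0 mul1r; field; rewrite nat1r n0 fn0.
Qed.
End Aux.

Theorem lemma2 (T : finType) (R : realFieldType) (N : {set T})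
  (w : {set T} -> {set {set T}} -> R) (i : T) :
  is_TUX N w -> i \in N ->
  forall S : {set T}, S \subset N :\ i ->
    avg_game (N :\ i) (restr_star N w i) S = avg_game N w S.
Proof.
move=> _ iN S sS.
set D := N :\ i :\: S.
have iS : i \notin S by apply/negP => /(subsetP sS); rewrite !inE eqxx.
have iD : i \notin D by rewrite /D !inE eqxx /= andbF.
have hA : N :\: S = i |: D.
  apply/setP=> x; rewrite /D !inE; case: (eqVneq x i) => [->|] //=.
  by rewrite iS iN.
have hn : (#|N| - #|S|)%:R = #|i |: D|%:R :> R.
  rewrite -hA cardsD; suff -> : N :&: S = S by [].
  by apply/setIidPr; apply: subset_trans sS (subsetDl _ _).
rewrite /avg_game hA -/D.
transitivity (\sum_(pi | partition pi D) \sum_(B in pi :|: [set set0])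
   ewens R (i |: D) (add_to_block pi i B) * w S (add_to_block pi i B)).
  apply: eq_bigr => pi pD.
  rewrite (bigD1 set0) /=; last by rewrite !inE eqxx orbT.
  rewrite /restr_star hn mulrDr; congr (_ + _).
    rewrite ewens_phi // ?inE ?eqxx ?orbT // mulr1.
    rewrite /add_singleton /add_to_block setD1_notin ?(partition0 pD) // set0U.
    by rewrite mulrA mulrAC.
  rewrite big_distrr /=.
  apply: eq_big => [B|B BP].
    rewrite !inE; case: eqVneq => [->|] /=; first by rewrite (partition0 pD).
    by rewrite orbF andbT.
  rewrite (ewens_phi T R pi D B i) // ?inE ?BP // (negbTE (partition_neq0 pD BP)).
  by rewrite !mulrA.
rewrite pair_big_dep /=.
rewrite (reindex_onto (fun p => add_to_block p.1 i p.2) (psi T i)) /=; last first.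
  by move=> P pP; apply: (phi_psi T P D i iD pP).
apply: eq_bigl => -[pi B] /=.
apply/andP/andP => [[pD HB]|[pP /eqP E]].
  by split; [apply: (phi_part T pi D B i) | rewrite (psi_phi T pi D B i)].
by have := psi_part T _ D i iD pP; rewrite E => /andP.
Qed.
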